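(* Let $w:=3/\sqrt{2}$, and for $t\in[0,w]$ let $x:=-t+wi$ and $X:=1/x$. Define $$G_5:=X+qX^2+q^3X^3+q^6X^4+q^{10}X^5,\qquad G_*:=\sum_{j=5}^{\infty}q^{j(j+1)/2}X^{j+1}.$$ Then for all $(q,t)\in[0.6,1]\times[0,w]$ one has $|G_*|<0.0208$ and $|G_5|>0.147$.
   Context: Note $G_5+G_*=\sum_{j=-\infty}^{-1}q^{j(j+1)/2}x^j$. *)

(* Defs.v *)
From Stdlib Require Import Reals.
From Coquelicot Require Import Coquelicot.
Open Scope R_scope.

Definition Cpow (z : C) (n : nat) : C := @pow_n C_Ring z n.

Definition w : R := 3 / sqrt 2.

Definition Xof (t : R) : C := Cinv (RtoC (- t) + RtoC w * Ci)%C.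

Definition G5 (q t : R) : C :=
  let X := Xof t in
  (X + RtoC q * Cpow X 2 + RtoC (q ^ 3) * Cpow X 3
     + RtoC (q ^ 6) * Cpow X 4 + RtoC (q ^ 10) * Cpow X 5)%C.

(* n-th term of G_* : index j = n + 5, term q^{j(j+1)/2} X^{j+1} *)
Definition Gstar_term (q t : R) (n : nat) : C :=
  let j := (n + 5)%nat in
  (RtoC (q ^ (Nat.div (j * (j + 1)) 2)) * Cpow (Xof t) (j + 1))%C.

(* Main.v *)
Require Import Defs.
From Stdlib Require Import Reals Lra Psatz.
From Coquelicot Require Import Coquelicot.
Open Scope R_scope.

Lemma Cpow_eq (z : C) (n : nat) : Defs.Cpow z n = Complex.Cpow z n.
Proof. induction n; [reflexivity|]. change (Complex.Cpow z (S n)) with (z * Complex.Cpow z n)%C. rewrite <- IHn. reflexivity. Qed.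

Lemma pow_le1 (q : R) (k : nat) : 0 <= q <= 1 -> 0 <= q ^ k <= 1.
Proof.
  intros [H0 H1]. induction k; simpl; [lra|]. destruct IHk. split; nra.
Qed.

Lemma w2 : w ^ 2 = 9/2.
Proof.
  unfold w. assert (H := sqrt_lt_R0 2 ltac:(lra)).
  replace ((3 / sqrt 2)^2) with (9 / (sqrt 2 * sqrt 2)) by (field; lra).
  rewrite sqrt_sqrt; lra.
Qed.

Lemma w_pos : 0 < w.
Proof. unfold w. assert (H := sqrt_lt_R0 2 ltac:(lra)). apply Rdiv_lt_0_compat; lra. Qed.

Lemma x_eq t : (RtoC (- t) + RtoC w * Ci)%C = ((- t)%R, w).
Proof. apply injective_projections; simpl; ring. Qed.

Lemma x_neq0 t : ((- t)%R, w) <> RtoC 0.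
Proof. intro H. injection H. intros. pose proof w_pos. lra. Qed.

Lemma s_facts t : 0 <= t <= w ->
  let s := Cmod (Xof t) in
  0 < s /\ s ^ 2 * (t ^ 2 + 9/2) = 1 /\ Re (Xof t) = - t * s ^ 2.
Proof.
  intros Ht s.
  assert (Hu : 0 < t^2 + 9/2) by nra.
  assert (Hs : s = / sqrt (t^2 + 9/2)).
  { unfold s, Xof. rewrite x_eq, Cmod_inv by apply x_neq0. f_equal.
    unfold Cmod. simpl fst; simpl snd. rewrite w2. f_equal; ring. }
  assert (Hq := sqrt_lt_R0 _ Hu). assert (Hq2 := sqrt_sqrt _ (Rlt_le _ _ Hu)).
  assert (Hs2 : s ^ 2 * (t ^ 2 + 9/2) = 1).
  { rewrite Hs. set (r := sqrt (t^2 + 9/2)) in *. rewrite <- Hq2. field. lra. }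
  repeat split.
  - rewrite Hs. apply Rinv_0_lt_compat; lra.
  - exact Hs2.
  - unfold Xof. rewrite x_eq. unfold Cinv. simpl Re. simpl fst; simpl snd.
    replace (w * (w * 1)) with (w^2) by ring. rewrite w2. replace (s^2) with (/ (t^2 + 9/2)).
    2:{ apply (Rmult_eq_reg_r (t^2 + 9/2)); [rewrite Hs2; field | ]; lra. }
    field. lra.
Qed.

Lemma series_part q t : 0.6 <= q <= 1 -> 0 <= t <= w ->
  exists S : C, is_series (V := C_NormedModule) (Gstar_term q t) S /\ Cmod S < 0.0208.
Proof.
  intros Hq Ht.
  destruct (s_facts t Ht) as [Hs [Hs2 _]].
  set (s := Cmod (Xof t)) in *.
  assert (Hsb : s ^ 2 <= 2/9).
  { assert (0 <= s^2 * t^2) by (apply Rmult_le_pos; apply pow2_ge_0). nra. }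
  assert (Hs1 : s < 0.4715) by nra.
  set (b := fun n : nat => s ^ 6 * s ^ n).
  assert (Hb : is_series b (s ^ 6 * / (1 - s))).
  { apply (is_series_scal (K := R_AbsRing) (V := R_NormedModule) (s ^ 6) (fun n => s ^ n)).
    apply is_series_geom. rewrite Rabs_pos_eq; lra. }
  assert (Hle : forall n, norm (Gstar_term q t n) <= b n).
  { intro n. change (Cmod (Gstar_term q t n) <= b n). unfold Gstar_term, b.
    rewrite Cmod_mult, Cpow_eq, Cmod_R, Cmod_pow. fold s.
    destruct (pow_le1 q (Nat.div ((n + 5) * (n + 5 + 1)) 2) ltac:(lra)) as [P0 P1].
    rewrite Rabs_pos_eq by lra.
    set (k := Nat.div ((n + 5) * (n + 5 + 1)) 2) in *.
    replace (n + 5 + 1)%nat with (6 + n)%nat by lia. rewrite pow_add.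
    assert (0 <= s ^ 6 * s ^ n) by (apply Rmult_le_pos; apply pow_le; lra).
    nra. }
  assert (Hex : ex_series (V := C_CompleteNormedModule) (Gstar_term q t)).
  { apply (ex_series_le _ b Hle). eexists; exact Hb. }
  destruct Hex as [S HS]. exists S. split; [exact HS|].
  assert (HB : Cmod S <= s ^ 6 * / (1 - s)).
  { assert (L1 : is_lim_seq (fun n => norm (sum_n (Gstar_term q t) n)) (norm S)).
    { apply (filterlim_comp _ _ _ (sum_n (Gstar_term q t)) norm eventually (locally S)).
      - exact HS.
      - apply filterlim_norm. }
    assert (L2 : is_lim_seq (sum_n b) (s ^ 6 * / (1 - s))) by exact Hb.
    assert (H := is_lim_seq_le _ _ _ _ (fun n => Rle_trans _ _ _ (norm_sum_n_m _ 0 n) (sum_n_m_le _ _ 0 n Hle)) L1 L2).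
    simpl in H. exact H. }
  assert (0 < 1 - s) by lra.
  assert (s ^ 6 < 0.0208 * (1 - s)).
  { replace (s ^ 6) with ((s^2)^3) by ring.
    assert ((s^2)^3 <= (2/9)^3).
    { apply pow_incr. split; [apply pow2_ge_0 | lra]. }
    lra. }
  apply Rle_lt_trans with (1 := HB).
  apply (Rmult_lt_reg_r (1 - s)); [lra|]. field_simplify; lra.
Qed.

Lemma poly_bound s : 1/3 <= s <= 0.4715 -> s - s^3 - s^4 - s^5 > 0.26.
Proof.
intros [H1 H2].
assert (P: 0 <= (s - 1/3) * (0.4715 - s)) by nra.
assert (P2: 0 <= s * ((s - 1/3) * (0.4715 - s))) by nra.
assert (P3: 0 <= s^2 * ((s - 1/3) * (0.4715 - s))) by nra.
assert (P4: 0 <= s^3 * ((s - 1/3) * (0.4715 - s))) by (apply Rmult_le_pos; [apply pow_le|]; lra).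
nra.
Qed.

Lemma ts3_bound s t : 0 < s -> 0<= t -> s ^ 2 * (t ^ 2 + 9 / 2) = 1 -> s^2 <= 2/9 -> t * s^3 <= 1/9.
Proof.
intros Hs Ht H H2.
assert (E: (t*s^3)^2 = (s^2*t^2) * (s^2)^2) by ring.
assert (A: (s^2*t^2) = 1 - 9/2 * s^2) by lra.
set (c := s^2) in *.
assert (c0 : 0 <= c) by (apply pow_le; lra).
assert (Hc: 0 <= (c - 1/9)^2) by apply pow2_ge_0.
assert (F1 : c * (1 - 9/2*c) <= 1/18) by nra.
assert (F2 : 0 <= c * (1 - 9/2*c)) by nra.
assert (B: (t*s^3)^2 <= 1/81). { rewrite E, A. nra. }
assert (0 <= t*s^3) by (apply Rmult_le_pos; [lra| apply pow_le; lra]).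
nra.
Qed.

Lemma g5_part q t : 0.6 <= q <= 1 -> 0 <= t <= w -> Cmod (G5 q t) > 0.147.
Proof.
  intros Hq Ht.
  destruct (s_facts t Ht) as [Hs [Hs2 HRe]].
  set (X := Xof t) in *. set (s := Cmod X) in *.
  assert (Hw := w2).
  assert (Hsb : s ^ 2 <= 2/9).
  { assert (0 <= s^2 * t^2) by (apply Rmult_le_pos; apply pow2_ge_0). nra. }
  assert (Hs1 : s < 0.4715) by nra.
  assert (Ht2 : t^2 <= 9/2) by nra.
  assert (Hs3 : 1/3 <= s).
  { assert (s^2 >= 1/9) by nra. nra. }
  set (Z := (RtoC (q^3) * Complex.Cpow X 2 + RtoC (q^6) * Complex.Cpow X 3
             + RtoC (q^10) * Complex.Cpow X 4)%C).
  assert (HG : G5 q t = (X * (1 + RtoC q * X + Z))%C).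
  { unfold G5, Z. fold X. rewrite (Cpow_eq X 2), (Cpow_eq X 3), (Cpow_eq X 4), (Cpow_eq X 5). simpl Complex.Cpow. ring. }
  assert (HZ : Cmod Z <= s^2 + s^3 + s^4).
  { unfold Z.
    destruct (pow_le1 q 3 ltac:(lra)). destruct (pow_le1 q 6 ltac:(lra)).
    destruct (pow_le1 q 10 ltac:(lra)).
    eapply Rle_trans; [apply Cmod_triangle|].
    eapply Rle_trans; [apply Rplus_le_compat_r; apply Cmod_triangle|].
    rewrite !Cmod_mult, !Cmod_pow, !Cmod_R. fold s.
    rewrite !Rabs_pos_eq by lra.
    assert (0 <= s^2) by (apply pow_le; lra).
    assert (0 <= s^3) by (apply pow_le; lra).
    assert (0 <= s^4) by (apply pow_le; lra).
    nra. }
  assert (H1 : 1 - t * s^2 <= Cmod (1 + RtoC q * X)%C).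
  { eapply Rle_trans; [| apply Rle_trans with (2 := re_le_Cmod _); apply Rle_abs].
    rewrite re_plus, re_scal_l, HRe, re_RtoC.
    assert (0 <= t * s^2) by (apply Rmult_le_pos; [lra | apply pow_le; lra]).
    nra. }
  assert (H2 : Cmod (1 + RtoC q * X)%C <= Cmod (1 + RtoC q * X + Z)%C + Cmod Z).
  { rewrite <- (Cmod_opp Z).
    replace (1 + RtoC q * X)%C with ((1 + RtoC q * X + Z) + - Z)%C at 1 by ring.
    apply Cmod_triangle. }
  rewrite HG, Cmod_mult. fold s.
  assert (H3 : t * s^3 <= 1/9) by (apply ts3_bound; lra).
  assert (H4 := poly_bound s ltac:(lra)).
  assert (H5 : 1 - t * s^2 - (s^2 + s^3 + s^4) <= Cmod (1 + RtoC q * X + Z)%C) by lra.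
  apply Rlt_gt.
  apply Rlt_le_trans with (s * (1 - t * s^2 - (s^2 + s^3 + s^4))).
  - replace (s * (1 - t * s^2 - (s^2 + s^3 + s^4))) with (s - s^3 - s^4 - s^5 - t * s^3) by ring.
    lra.
  - apply Rmult_le_compat_l; lra.
Qed.

Theorem lemma2 : forall q t : R, 0.6 <= q <= 1 -> 0 <= t <= w ->
  (exists S : C, is_series (V := C_NormedModule) (Gstar_term q t) S /\ Cmod S < 0.0208)
  /\ Cmod (G5 q t) > 0.147.
Proof.
  intros q t Hq Ht. split; [apply series_part | apply g5_part]; assumption.
Qed.
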